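(* For every $k\in\mathcal K^{(\ell)}$, $$\chi_k=-\sum_{k'\in\mathcal K^{(\ell)}}\langle f_{-k'},p^T_k\rangle\chi_{-k'}+\sum_{k'\in\mathcal K^{(\ell_L)}}\langle f^L_{k'},p^T_k\rangle\chi^L_{k'}+\sum_{k'\in\mathcal K^{(\ell_R)}}\langle f^R_{k'},p^T_k\rangle\chi^R_{k'};$$ for every $k\in\mathcal K^{(\ell_L)}$, $$\chi^L_{-k}=\sum_{k'\in\mathcal K^{(\ell)}}\langle f_{-k'},p^L_k\rangle\chi_{-k'}-\sum_{k'\in\mathcal K^{(\ell_L)}}\langle f^L_{k'},p^L_k\rangle\chi^L_{k'}-\sum_{k'\in\mathcal K^{(\ell_R)}}\langle f^R_{k'},p^L_k\rangle\chi^R_{k'};$$ and for every $k\in\mathcal K^{(\ell_R)}$, $$\chi^R_{-k}=\sum_{k'\in\mathcal K^{(\ell)}}\langle f_{-k'},p^R_k\rangle\chi_{-k'}-\sum_{k'\in\mathcal K^{(\ell_L)}}\langle f^L_{k'},p^R_k\rangle\chi^L_{k'}-\sum_{k'\in\mathcal K^{(\ell_R)}}\langle f^R_{k'},p^R_k\rangle\chi^R_{k'}.$$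
   Context: Fix integers $a<0<b$, $\ell=b-a$, $\ell_L=-a$, $\ell_R=b$; $\mathcal K^{(n)}=\{\frac12,\dots,n-\frac12\}$. $C=\{a,\dots,b\}$, $C^*=\{a+\frac12,\dots,b-\frac12\}$, $C^*_L=\{a+\frac12,\dots,-\frac12\}$, $C^*_R=\{\frac12,\dots,b-\frac12\}$. $\tilde V$ has basis $(e_\rho)_{\rho\in\{\pm1\}^C}$; for $x'\in C^*$, $\varsigma_{x'}(\rho)$ flips signs of $\rho_x$, $x<x'$; $\psi_{x'}e_\rho=\frac{-\rho_{x'-1/2}+i\rho_{x'+1/2}}{\sqrt2}e_{\varsigma_{x'}(\rho)}$, $\psi^*_{x'}e_\rho=\frac{-i\rho_{x'-1/2}+\rho_{x'+1/2}}{\sqrt2}e_{\varsigma_{x'}(\rho)}$. Eigenfunctions: for integers $a'<b'$, $n=b'-a'$, on the lattice strip $\{a',\dots,b'\}\times\mathbb Z\subset\mathbb C$ (nearest-neighbour edges identified with midpoints), $F$ is s-holomorphic if $F(z_1)+\frac{i|v-p|}{v-p}\overline{F(z_1)}=F(z_2)+\frac{i|v-p|}{v-p}\overline{F(z_2)}$ for edges adjacent to a common vertex $v$ and face $p$, with Riemann boundary values if $F(a'+iy')\in e^{-i\pi/4}\mathbb R$, $F(b'+iy')\in e^{i\pi/4}\mathbb R$. For $k\in\mathcal K^{(n)}$, $\omega_k\in((k-\frac12)\pi/n,k\pi/n)$ solves $\cos((n+\frac12)\omega)/\cos((n-\frac12)\omega)=3-2\sqrt2$, $\lambda_{\pm k}=(2-\cos\omega_k+\sqrt{(3-\cos\omega_k)(1-\cos\omega_k)})^{\pm1}$;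 $F_{\pm k}$ is the unique s-holomorphic function with Riemann boundary values, $F_{\pm k}(z+ih)=\lambda_{\pm k}^hF_{\pm k}(z)$, values in $e^{-i\pi/4}\mathbb R_{>0}$ on edges $a'+iy'$, and unit $\ell^2$-norm restriction to the height-0 horizontal edges. $f_{\pm k}$ ($k\in\mathcal K^{(\ell)}$): restrictions for $(a,b)$; $f^L_{\pm k}$ ($k\in\mathcal K^{(\ell_L)}$): for $(a,0)$; $f^R_{\pm k}$ ($k\in\mathcal K^{(\ell_R)}$): for $(0,b)$; the latter two are extended by zero to $C^*$. Function space: $H=\mathbb C^{C^*}$, real Hilbert space with $\langle f,g\rangle=\mathrm{Re}\sum_{x'\in C^*}f(x')\overline{g(x')}$. Known facts: $(f_k)_{k\in\pm\mathcal K^{(\ell)}}$ is an orthonormal basis of $H$; $(f^L_k)_{k\in\pm\mathcal K^{(\ell_L)}}$ and $(f^R_k)_{k\in\pm\mathcal K^{(\ell_R)}}$ are orthonormal bases of the subspaces of functions supported on $C^*_L$, resp. $C^*_R$. $\Pi_{T;pole},\Pi_{L;pole},\Pi_{R;pole}$ are the orthogonal projections onto $\mathrm{span}\{f_{+k}:k\in\mathcal K^{(\ell)}\}$, $\mathrm{span}\{f^L_{-k}:k\in\mathcal K^{(\ell_L)}\}$, $\mathrm{span}\{f^R_{-k}:k\in\mathcal K^{(\ell_R)}\}$. Pole functions: $p^T_k,p^L_k,p^R_k\in H$ are the unique elements with $(\Pi_{T;pole},\Pi_{L;pole},\Pi_{R;pole})(p^T_k)=(f_k,0,0)$, $(\Pi_{T;pole},\Pi_{L;pole},\Pi_{R;pole})(p^L_k)=(0,f^L_{-k},0)$,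 $(\Pi_{T;pole},\Pi_{L;pole},\Pi_{R;pole})(p^R_k)=(0,0,f^R_{-k})$. Modes: for $f\in H$, $\phi(f)=\frac{e^{i\pi/4}}{2}\sum_{x'\in C^*}(i f(x')\psi_{x'}-i\overline{f(x')}\psi^*_{x'})$; $\chi_k=\phi(f_k)$, $\chi^L_k=\phi(f^L_k)$, $\chi^R_k=\phi(f^R_k)$. *)

(* Defs.v *)
From HB Require Import structures.
From mathcomp Require Import all_boot all_order all_algebra.
From mathcomp Require Import complex.
From mathcomp Require Import reals trigo.

Set Implicit Arguments.
Unset Strict Implicit.
Unset Printing Implicit Defensive.

Import Order.TTheory GRing.Theory Num.Theory.
Local Open Scope ring_scope.
Local Open Scope complex_scope.

Section Defs.
Variable R : realType.
Local Notation C := R[i].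

Definition half : R := 2^-1.
Definition sqrt2 : R := Num.sqrt 2.

Definition eip4 : C := (sqrt2^-1) +i* (sqrt2^-1).
Definition eim4 : C := (sqrt2^-1) -i* (sqrt2^-1).

(* midpoint of the horizontal edge from x + iy to (x+1) + iy *)
Definition hedge (x y : int) : C := (x%:~R + half) +i* (y%:~R).
(* midpoint of the vertical edge from x + iy to x + i(y+1) *)
Definition vedge (x y : int) : C := (x%:~R) +i* (y%:~R + half).

(* s-holomorphicity on the strip {a',...,b'} x Z: for every vertex v = x+iy
   of the strip and every face p adjacent to v (p = v + (+-1/2) + i(+-1/2),
   inside the strip), the two edges z1 (horizontal) and z2 (vertical) adjacent
   to both v and p satisfy
     F z1 + i|v-p|/(v-p) conj(F z1) = F z2 + i|v-p|/(v-p) conj(F z2). *)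
Definition s_holomorphic (a' b' : int) (F : C -> C) : Prop :=
  forall (x y : int) (sx sy : bool),
    let xp := if sx then x else x - 1 in
    let yp := if sy then y else y - 1 in
    (a' <= x <= b')%R -> (a' <= xp)%R -> (xp < b')%R ->
    let v : C := (x%:~R) +i* (y%:~R) in
    let p : C := (xp%:~R + half) +i* (yp%:~R + half) in
    let c : C := 'i * `|v - p| / (v - p) in
    let z1 := hedge xp y in
    let z2 := vedge x yp in
    F z1 + c * (F z1)^* = F z2 + c * (F z2)^*.

Definition riemann_bv (a' b' : int) (F : C -> C) : Prop :=
  forall y : int,
    (exists r : R, F (vedge a' y) = r%:C * eim4) /\
    (exists r : R, F (vedge b' y) = r%:C * eip4).

(* The eigenfunction F_{+k} (plus = true) or F_{-k} (plus = false) of the strip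
   {a',...,b'} x Z, n = b' - a', where k = m + 1/2 ranges over K^(n). *)
Definition eigen_spec (a' b' : int) (plus : bool) (m : nat) (F : C -> C) : Prop :=
  let n : nat := absz (b' - a') in
  let nr : R := n%:R in
  exists w : R,
    m%:R * pi / nr < w /\ w < (m%:R + half) * pi / nr /\
    cos ((nr + half) * w) / cos ((nr - half) * w) = 3 - 2 * sqrt2 /\
    let Lam : R := 2 - cos w + Num.sqrt ((3 - cos w) * (1 - cos w)) in
    let lam : R := if plus then Lam else Lam^-1 in
    s_holomorphic a' b' F /\
    riemann_bv a' b' F /\
    (forall (x y h : int), (a' <= x)%R -> (x < b')%R ->
        F (hedge x y + 'i * (h%:~R)%:C) = (lam ^ h)%:C * F (hedge x y)) /\
    (forall (x y h : int), (a' <= x <= b')%R ->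
        F (vedge x y + 'i * (h%:~R)%:C) = (lam ^ h)%:C * F (vedge x y)) /\
    (forall y : int, exists2 r : R, 0 < r & F (vedge a' y) = r%:C * eim4) /\
    \sum_(j < n) `|F (hedge (a' + j%:Z) 0)| ^+ 2 = 1.

(* Dual points x' in C^* = {a+1/2,...,b-1/2} are indexed by j : 'I_(b-a),
   x' = a + j + 1/2. *)
Definition ell (a b : int) : nat := absz (b - a).
Definition Hsp (a b : int) := {ffun 'I_(ell a b) -> C}.

Definition restr (a b a' b' : int) (F : C -> C) : Hsp a b :=
  [ffun j : 'I_(ell a b) =>
     if ((a' <= a + (j : nat)%:Z) && (a + (j : nat)%:Z < b'))%R
     then F (hedge (a + (j : nat)%:Z) 0) else 0].

Definition inner (a b : int) (f g : Hsp a b) : R :=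
  complex.Re (\sum_(j < ell a b) f j * (g j)^*).

Definition is_orth_proj (a b : int) (n : nat) (S : 'I_n -> Hsp a b)
    (p q : Hsp a b) : Prop :=
  (exists c : 'I_n -> R, q = \sum_(i < n) (c i)%:C *: S i) /\
  (forall i : 'I_n, inner (p - q) (S i) = 0).

(* sites x in C = {a,...,b} indexed by i : 'I_(b-a+1), x = a + i;
   rho : {+-1}^C encoded as booleans (true = +1). *)
Definition Sconf (a b : int) := {ffun 'I_(ell a b).+1 -> bool}.
Definition Vt (a b : int) := {ffun Sconf a b -> C}.

Definition sgnR (s : bool) : R := if s then 1 else -1.

(* varsigma_{x'}: flip rho_x for x < x', i.e. i <= j *)
Definition varsigma (a b : int) (j : 'I_(ell a b)) (rho : Sconf a b)
    : Sconf a b :=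
  [ffun i : 'I_(ell a b).+1 => if (i <= j)%N then ~~ rho i else rho i].

Definition rho_l (a b : int) (j : 'I_(ell a b)) (rho : Sconf a b) : R :=
  sgnR (rho (inord j)).
Definition rho_r (a b : int) (j : 'I_(ell a b)) (rho : Sconf a b) : R :=
  sgnR (rho (inord j.+1)).

Definition coef_psi (a b : int) (j : 'I_(ell a b)) (rho : Sconf a b) : C :=
  ((- rho_l j rho)%:C + 'i * (rho_r j rho)%:C) / sqrt2%:C.
Definition coef_psis (a b : int) (j : 'I_(ell a b)) (rho : Sconf a b) : C :=
  (- 'i * (rho_l j rho)%:C + (rho_r j rho)%:C) / sqrt2%:C.

(* linear extension of e_rho |-> coef(rho) e_{varsigma(rho)}; varsigma is an
   involution, so the coefficient at sigma comes from rho = varsigma(sigma) *)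
Definition psi (a b : int) (j : 'I_(ell a b)) (v : Vt a b) : Vt a b :=
  [ffun sigma => coef_psi j (varsigma j sigma) * v (varsigma j sigma)].
Definition psis (a b : int) (j : 'I_(ell a b)) (v : Vt a b) : Vt a b :=
  [ffun sigma => coef_psis j (varsigma j sigma) * v (varsigma j sigma)].

Definition phi (a b : int) (f : Hsp a b) (v : Vt a b) : Vt a b :=
  (eip4 / 2%:R) *:
    \sum_(j < ell a b) (('i * f j) *: psi j v - ('i * (f j)^*) *: psis j v).

End Defs.

(* Main.v *)
Require Import Defs.
From HB Require Import structures.
From mathcomp Require Import all_boot all_order all_algebra.
From mathcomp Require Import complex.
From mathcomp Require Import reals trigo.
From mathcomp Require Import ring lra zify.
Import Order.TTheory GRing.Theory Num.Theory.
Local Open Scope ring_scope.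
Local Open Scope complex_scope.
Set Implicit Arguments.
Unset Strict Implicit.
Unset Printing Implicit Defensive.
Section S.
Variable R : realType.
Local Notation C := R[i].
Definition tt2 : R := (sqrt2 R) ^-1.
Lemma sqrt2_gt0 : 0 < sqrt2 R.
Proof. by rewrite /sqrt2 sqrtr_gt0 ltr0n. Qed.
Lemma sqrt2_sq : (sqrt2 R) ^+ 2 = 2.
Proof. by rewrite /sqrt2 sqr_sqrtr ?ler0n. Qed.
Lemma tt2_sq : 2 * tt2 ^+ 2 = 1.
Proof. by rewrite /tt2 exprVn sqrt2_sq mulfV // pnatr_eq0. Qed.
Lemma half2 : Defs.half R + Defs.half R = 1.
Proof. rewrite /Defs.half; lra. Qed.
Lemma sqrt_halfs : Num.sqrt (Defs.half R ^+ 2 + Defs.half R ^+ 2) = tt2.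
Proof.
have ht : 0 <= tt2 by rewrite /tt2 invr_ge0 ltW // sqrt2_gt0.
rewrite -[RHS](ger0_norm ht) -sqrtr_sqr; congr Num.sqrt.
have := tt2_sq; rewrite /Defs.half; set X := tt2 ^+ 2 => h.
have -> : X = 2^-1 by lra.
by rewrite expr2; field.
Qed.
Lemma c_val (e1 e2 : R) : e1 ^+ 2 = 1 -> e2 ^+ 2 = 1 ->
  'i * `|(e1 * Defs.half R) +i* (e2 * Defs.half R)| / ((e1 * Defs.half R) +i* (e2 * Defs.half R))
  = (e2 * tt2) +i* (e1 * tt2).
Proof.
move=> h1 h2.
have hn : `|(e1 * Defs.half R) +i* (e2 * Defs.half R)| = tt2%:C.
  by rewrite normc_def /= !exprMn h1 h2 !mul1r sqrt_halfs.
have nz : (e1 * Defs.half R) +i* (e2 * Defs.half R) != 0.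
  rewrite -normr_gt0 hn ltcR /tt2 invr_gt0; exact: sqrt2_gt0.
rewrite hn; apply: (canLR (mulfK nz)).
apply/eqP; rewrite eq_complex /=; apply/andP; split; apply/eqP.
- ring.
- have -> : e2 * tt2 * (e2 * Defs.half R) + e1 * tt2 * (e1 * Defs.half R)
    = (e1 ^+ 2 + e2 ^+ 2) * tt2 * Defs.half R by ring.
  by rewrite h1 h2 /Defs.half; field.
Qed.

Lemma corner (F : C -> C) (a' b' x y : int) (sx sy : bool) :
  s_holomorphic a' b' F -> (a' <= x <= b')%R ->
  (a' <= (if sx then x else x - 1))%R -> ((if sx then x else x - 1) < b')%R ->
  let c := ((if sy then -1 else 1) * tt2) +i* ((if sx then -1 else 1) * tt2) in
  F (hedge R (if sx then x else x - 1) y) + c * (F (hedge R (if sx then x else x-1) y))^* =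
  F (vedge R x (if sy then y else y - 1)) + c * (F (vedge R x (if sy then y else y-1)))^*.
Proof.
move=> hs h1 h2 h3 c; have := hs x y sx sy h1 h2 h3.
move=> /=.
have hh := half2.
have hvp : (x%:~R +i* y%:~R -
    ((if sx then x else x - 1)%:~R + Defs.half R) +i* 
    ((if sy then y else y - 1)%:~R + Defs.half R) : C)
    = ((if sx then -1 else 1) * Defs.half R) +i* ((if sy then -1 else 1) * Defs.half R).
  apply/eqP; rewrite eq_complex /=; apply/andP; split; apply/eqP;
    [case: (sx) | case: (sy)]; rewrite ?intrB /=; lra.
rewrite hvp c_val //; [by case: (sx); rewrite ?sqrrN expr1n | by case: (sy); rewrite ?sqrrN expr1n].
Qed.
Lemma face_real (t la mu h1 h2 l1 l2 r1 r2 k1 k2 m1 m2 n1 n2 : R) :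
  2 * t ^+ 2 = 1 ->
  (h1 - l1) + (-t)*(h1 - l1) + (-t)*(h2 - l2) = 0 ->
  (h1 - r1) + (-t)*(h1 - r1) + t*(h2 - r2) = 0 ->
  (la*h1 - l1) + t*(la*h1 - l1) + (-t)*(la*h2 - l2) = 0 ->
  (la*h1 - r1) + t*(la*h1 - r1) + t*(la*h2 - r2) = 0 ->
  (k1 - m1) + (-t)*(k1 - m1) + (-t)*(k2 - m2) = 0 ->
  (k1 - n1) + (-t)*(k1 - n1) + t*(k2 - n2) = 0 ->
  (mu*k1 - m1) + t*(mu*k1 - m1) + (-t)*(mu*k2 - m2) = 0 ->
  (mu*k1 - n1) + t*(mu*k1 - n1) + t*(mu*k2 - n2) = 0 ->
  (mu - la) * (h1 * k1 + h2 * k2) = (r2 * n1 - r1 * n2) - (l2 * m1 - l1 * m2).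
Proof.
set EA := (h1 - l1) + _ + _; set EB := (h1 - r1) + _ + _.
set EC := (la*h1 - l1) + _ + _; set ED := (la*h1 - r1) + _ + _.
set GA := (k1 - m1) + _ + _; set GB := (k1 - n1) + _ + _.
set GC := (mu*k1 - m1) + _ + _; set GD := (mu*k1 - n1) + _ + _.
move=> ht eA eB eC eD gA gB gC gD.
apply/eqP; rewrite -subr_eq0; apply/eqP.
have -> : (mu - la) * (h1 * k1 + h2 * k2) - ((r2 * n1 - r1 * n2) - (l2 * m1 - l1 * m2)) =
  ((-1) * k1 + (2) * k1 * t + (-1) * k2 + (-2) * k2 * t + (1) * m1 + (1) * m2 + (1) * n1 + (-1) * n1 * t + (1) * n2 * t) * EA + ((1) * n1 * t + (1) * n1 + (1) * n2 * t) * EB + ((1) * k1 + (-2) * k1 * t + (-1) * k2 + (2) * k2 * t + (-2) * n1 + (3) * n1 * t + (1) * n2 + (-1) * n2 * t) * EC + ((1) * h2 + (-1) * l1 + (-1) * h1 * t + (-1) * l2 + (1) * h2 * t) * GA + ((1) * h1 + (-1) * h1 * la + (-1) * h2 * la + (-1) * h1 * t + (-1) * l1 + (-1) * h2 * t + (1) * l2) * GB + ((1) * h1 + (-1) * h1 * t + (-1) * h2 * t) * GC + ((1) * h1 + (-1) * h1 * t + (1) * h2 * t) * GD + ((-1) * n1 + (1) * n1 * t + (-1) * n2 * t) * ED + ((-2) * k1 * l1 + (1) * h2 * k1 + (-1) * h1 * k2 + (2) * k2 * l1 + (2) * l1 * n1 + (-1) * l2 * n1 + (-1) * l1 * n2 +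 (1) * n1 * r2 + (-1) * n2 * r1 + (1) * h1 * k1 * la + (-1) * h2 * k1 * la + (1) * h1 * m2 + (-1) * h2 * m1 + (-1) * h1 * k2 * la + (1) * h2 * k2 * la + (-2) * h1 * la * n1 + (1) * h2 * la * n1 + (1) * h1 * la * n2 + (1) * h1 * k1 * mu + (-1) * h2 * k2 * mu) * (2 * t ^+ 2 - 1) by rewrite /EA /EB /EC /ED /GA /GB /GC /GD; ring.
by rewrite eA eB eC eD gA gB gC gD ht subrr !mulr0 !addr0.
Qed.
Lemma corner_re (p q : R) (z1 z2 : C) :
  z1 + (p +i* q) * z1^* = z2 + (p +i* q) * z2^* ->
  (complex.Re z1 - complex.Re z2) + p * (complex.Re z1 - complex.Re z2) + q * (complex.Im z1 - complex.Im z2) = 0.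
Proof.
case: z1 z2 => [x1 y1] [x2 y2]; simpc => /= -[e1 _].
have -> : x1 - x2 + p * (x1 - x2) + q * (y1 - y2) =
  (x1 + (p * x1 + q * y1)) - (x2 + (p * x2 + q * y2)) by ring.
by rewrite e1 subrr.
Qed.
Lemma ReMr (k : R) (z : C) : complex.Re (k%:C * z) = k * complex.Re z.
Proof. by case: z => x y; simpc. Qed.
Lemma ImMr (k : R) (z : C) : complex.Im (k%:C * z) = k * complex.Im z.
Proof. by case: z => x y; simpc. Qed.
Lemma ReMJ (z w : C) : complex.Re (z * w^*) = complex.Re z * complex.Re w + complex.Im z * complex.Im w.
Proof. by case: z w => x y [u v]; simpc. Qed.
Lemma ImMJ (z w : C) : complex.Im (z * w^*) = complex.Im z * complex.Re w - complex.Re z * complex.Im w.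
Proof. by case: z w => x y [u v]; simpc => /=; ring. Qed.
Lemma hedge_up (x y : int) : hedge R x y + 'i * (((1:int)%:~R : R)%:C) = hedge R x (y + 1).
Proof. by apply/eqP; rewrite eq_complex /= intrD !mul0r !mulr1 !mul1r; simpc. Qed.
Definition shiftH (a' b' : int) (F : C -> C) (la : R) :=
  forall (x y h : int), (a' <= x)%R -> (x < b')%R ->
        F (hedge R x y + 'i * (h%:~R)%:C) = (la ^ h)%:C * F (hedge R x y).

Lemma face (F G : C -> C) (a' b' : int) (la mu : R) (x0 : int) :
  s_holomorphic a' b' F -> s_holomorphic a' b' G ->
  shiftH a' b' F la -> shiftH a' b' G mu -> (a' <= x0)%R -> (x0 < b')%R ->
  (mu - la) * complex.Re (F (hedge R x0 0) * (G (hedge R x0 0))^*) =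
   complex.Im (F (vedge R (x0+1) 0) * (G (vedge R (x0+1) 0))^*)
   - complex.Im (F (vedge R x0 0) * (G (vedge R x0 0))^*).
Proof.
move=> sF sG hF hG h0 h1.
have up : forall (H : C -> C) k, shiftH a' b' H k -> H (hedge R x0 1) = k%:C * H (hedge R x0 0).
  move=> H k hH; have := hH x0 0 1 h0 h1; rewrite hedge_up add0r expr1z; exact.
have b1 : (a' <= x0 <= b')%R by rewrite h0 /= ltW.
have b2 : (a' <= x0 + 1 <= b')%R.
  by apply/andP; split; [apply: (le_trans h0); rewrite lerDl | rewrite -ltzD1 ltrD2r].
have cAF := @corner F a' b' x0 0 true true sF b1 h0 h1.
have cAG := @corner G a' b' x0 0 true true sG b1 h0 h1.
have cCF := @corner F a' b' x0 1 true false sF b1 h0 h1.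
have cCG := @corner G a' b' x0 1 true false sG b1 h0 h1.
have e : x0 + 1 - 1 = x0 by rewrite addrK.
have cBF := @corner F a' b' (x0+1) 0 false true sF b2. rewrite /= e in cBF.
have cBG := @corner G a' b' (x0+1) 0 false true sG b2. rewrite /= e in cBG.
have cDF := @corner F a' b' (x0+1) 1 false false sF b2. rewrite /= e in cDF.
have cDG := @corner G a' b' (x0+1) 1 false false sG b2. rewrite /= e in cDG.
move: (cBF h0 h1) (cBG h0 h1) (cDF h0 h1) (cDG h0 h1) => {cBF cBG cDF cDG} cBF cBG cDF cDG.
rewrite /= subrr in cCF cCG cDF cDG.
rewrite (up F la hF) in cCF cDF; rewrite (up G mu hG) in cCG cDG.
move/corner_re: cAF; move/corner_re: cAG; move/corner_re: cBF; move/corner_re: cBG.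
move/corner_re: cCF; move/corner_re: cCG; move/corner_re: cDF; move/corner_re: cDG.
rewrite ?ReMr ?ImMr ?mulN1r ?mul1r => gD fD gC fC gB fB gA fA.
rewrite ReMJ !ImMJ.
by apply: face_real tt2_sq fA fB fC fD gA gB gC gD.
Qed.
Lemma ReD (x y : C) : complex.Re (x + y) = complex.Re x + complex.Re y.
Proof. by case: x y => ? ? [? ?]. Qed.
Lemma Re_sum (I : Type) (r : seq I) (P : pred I) (E : I -> C) :
  complex.Re (\sum_(i <- r | P i) E i) = \sum_(i <- r | P i) complex.Re (E i).
Proof. exact: (big_morph _ ReD). Qed.
Lemma Im_real_line (r r' : R) (w : C) : complex.Im ((r%:C * w) * (r'%:C * w)^*) = 0.
Proof. by rewrite ImMJ !ReMr !ImMr; ring. Qed.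

Lemma strip_orth (F G : C -> C) (a' b' : int) (la mu : R) : (a' < b')%R ->
  s_holomorphic a' b' F -> s_holomorphic a' b' G ->
  shiftH a' b' F la -> shiftH a' b' G mu ->
  riemann_bv a' b' F -> riemann_bv a' b' G ->
  (mu - la) * complex.Re (\sum_(j < absz (b' - a'))
       F (hedge R (a' + (j : nat)%:Z) 0) * (G (hedge R (a' + (j : nat)%:Z) 0))^*) = 0.
Proof.
move=> hab sF sG hF hG rF rG.
set n := absz (b' - a').
have hn : (a' + n%:Z = b')%R by rewrite /n gtz0_abs ?subr_gt0 // [a' + _]addrC subrK.
pose Phi (j : nat) := complex.Im (F (vedge R (a' + j%:Z) 0) * (G (vedge R (a' + j%:Z) 0))^*).
rewrite Re_sum mulr_sumr.
rewrite -(big_mkord (fun _ => true) (fun j : nat => (mu - la) * complex.Re (F (hedge R (a' + j%:Z) 0) * (G (hedge R (a' + j%:Z) 0))^*))).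
rewrite (telescope_sumr_eq Phi) //.
  rewrite /Phi hn addr0.
  case: (rF 0) => _ [r1 ->]; case: (rG 0) => _ [r2 ->].
  case: (rF 0) => [[r3 ->] _]; case: (rG 0) => [[r4 ->] _].
  by rewrite !Im_real_line subrr.
move=> k /andP [_ hk].
rewrite (face sF sG hF hG).
- by rewrite /Phi -addrA (addrC (Posz k)) -intS.
- lia.
- lia.
Qed.
Definition Lam (w : R) := 2 - cos w + Num.sqrt ((3 - cos w) * (1 - cos w)).

Lemma cos_lt1 (w : R) : 0 < w -> w <= pi -> cos w < 1.
Proof.
move=> h0 h1; rewrite -cos0 ltr_cos // in_itv /= ?h1 ?(ltW h0) ?lexx ?pi_ge0 //.
Qed.

Lemma Lam_gt1 (w : R) : 0 < w -> w <= pi -> 1 < Lam w.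
Proof.
move=> h0 h1; have := cos_lt1 h0 h1; rewrite /Lam => hc.
have := sqrtr_ge0 ((3 - cos w) * (1 - cos w)); lra.
Qed.

Lemma Lam_incr (w w' : R) : 0 <= w -> w < w' -> w' <= pi -> Lam w < Lam w'.
Proof.
move=> h0 h1 h2.
have hc : cos w' < cos w.
  rewrite ltr_cos // in_itv /= ?h0 ?h2 /=.
  - by rewrite (le_trans (ltW h1)).
  - by rewrite (le_trans h0 (ltW h1)).
have c1 := cos_le1 w.
have c2 := cos_le1 w'.
have hs : Num.sqrt ((3 - cos w) * (1 - cos w)) <= Num.sqrt ((3 - cos w') * (1 - cos w')).
  rewrite ler_sqrt; last by apply: mulr_ge0; lra.
  apply: ler_pM; lra.
rewrite /Lam; lra.
Qed.

Lemma w_range (n m : nat) (w : R) : (m < n)%N ->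
  m%:R * pi / n%:R < w -> w < (m%:R + Defs.half R) * pi / n%:R -> 0 < w /\ w <= pi.
Proof.
move=> hmn h1 h2.
have hn : 0 < n%:R :> R by rewrite ltr0n; lia.
have hp := pi_gt0 R.
split.
  apply: le_lt_trans h1; apply: divr_ge0; [apply: mulr_ge0; [exact: ler0n | exact: pi_ge0] | exact: ltW].
apply: (le_trans (ltW h2)); rewrite ler_pdivrMr //.
have : (m.+1)%:R <= n%:R :> R by rewrite ler_nat.
rewrite -natr1 /Defs.half => hm.
rewrite [pi * _]mulrC; apply: ler_wpM2r; [exact: ltW | lra].
Qed.

Lemma w_lt (n m m' : nat) (w w' : R) : (m < m')%N ->
  w < (m%:R + Defs.half R) * pi / n%:R -> m'%:R * pi / n%:R < w' -> w < w'.
Proof.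
move=> hmm h1 h2; apply: (lt_trans h1); apply: le_lt_trans h2.
rewrite -!mulrA; apply: ler_wpM2r.
  apply: mulr_ge0; [exact: pi_ge0 | by rewrite invr_ge0 ler0n].
have : (m.+1)%:R <= m'%:R :> R by rewrite ler_nat.
rewrite -natr1 /Defs.half => hm; lra.
Qed.
Definition lamof (s : bool) (w : R) := if s then Lam w else (Lam w)^-1.
Definition inrange (n m : nat) (w : R) :=
  m%:R * pi / n%:R < w /\ w < (m%:R + Defs.half R) * pi / n%:R.

Lemma lam_neq (n m m' : nat) (s s' : bool) (w w' : R) : (m < n)%N -> (m' < n)%N ->
  (s, m) != (s', m') -> inrange n m w -> inrange n m' w' -> lamof s w != lamof s' w'.
Proof.
move=> hm hm' hne [r1 r2] [r1' r2'].
have [w0 wpi] := w_range hm r1 r2.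
have [w0' wpi'] := w_range hm' r1' r2'.
have g1 := Lam_gt1 w0 wpi; have g1' := Lam_gt1 w0' wpi'.
have same : m != m' -> Lam w != Lam w'.
  move=> hmm; case: (ltngtP m m') => [lt|lt|eq]; last by rewrite eq eqxx in hmm.
  - by rewrite lt_eqF // Lam_incr ?(ltW w0) // (w_lt lt r2 r1').
  - by rewrite gt_eqF // Lam_incr ?(ltW w0') // (w_lt lt r2' r1).
rewrite /lamof; case: s s' hne => [] [] hne.
- by apply: same; apply: contra hne => /eqP ->.
- apply/eqP => e; have : (Lam w')^-1 < 1 by rewrite invf_lt1 // (lt_trans ltr01).
  by rewrite -e ltNge (ltW g1).
- apply/eqP => e; have : (Lam w)^-1 < 1 by rewrite invf_lt1 // (lt_trans ltr01).
  by rewrite e ltNge (ltW g1').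
- apply: contra (same _) => [/eqP /invr_inj -> //|]; by apply: contra hne => /eqP ->.
Qed.
Lemma normC2 (z : C) : z * z^* = `|z| ^+ 2.
Proof. rewrite -add_Re2_Im2; case: z => x y; simpc => /=; rewrite !expr2. by congr (_ +i* _); ring. Qed.

Lemma strip_ON (a' b' : int) (n : nat) (hab : (a' < b')%R) (hn : n = absz (b' - a'))
  (Fm : bool -> 'I_n -> C -> C) (h : forall s (k : 'I_n), eigen_spec a' b' s k (Fm s k))
  (s s' : bool) (k k' : 'I_n) :
  complex.Re (\sum_(j < n) Fm s k (hedge R (a' + (j : nat)%:Z) 0) * (Fm s' k' (hedge R (a' + (j : nat)%:Z) 0))^*)
  = ((s, k) == (s', k'))%:R.
Proof.
have [w [r1 [r2 [_ [sF [rF [shF [_ [_ nF]]]]]]]]] := h s k.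
have [w' [r1' [r2' [_ [sG [rG [shG [_ [_ nG]]]]]]]]] := h s' k'.
case: eqP => [[<- <-]|hne].
  rewrite (eq_bigr (fun j : 'I_n => `|Fm s k (hedge R (a' + (j : nat)%:Z) 0)| ^+ 2)).
    by rewrite hn nF.
  by move=> j _; rewrite normC2.
have shF' : shiftH a' b' (Fm s k) (lamof s w) := shF.
have shG' : shiftH a' b' (Fm s' k') (lamof s' w') := shG.
have := strip_orth hab sF sG shF' shG' rF rG; rewrite -hn.
move/eqP; rewrite mulf_eq0 => /orP [|/eqP -> //].
rewrite subr_eq0 eq_sym => e; exfalso; move: e; apply/negP.
have hk : (k < n)%N := ltn_ord k.
have hk' : (k' < n)%N := ltn_ord k'.
apply: (lam_neq (n := n) (m := k) (m' := k')) => //.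
- apply/eqP => -[e1 e2]; apply: hne; by rewrite e1 (ord_inj e2).
- by rewrite /inrange (_ : n%:R = (absz (b' - a'))%:R :> R) ?hn //; split.
- by rewrite /inrange (_ : n%:R = (absz (b' - a'))%:R :> R) ?hn //; split.
Qed.
Lemma sum_split (E : nat -> C) (n n1 n2 : nat) : n = (n1 + n2)%N ->
  \sum_(j < n) E j = \sum_(j < n1) E j + \sum_(j < n2) E (n1 + j)%N.
Proof. by move=> ->; rewrite big_split_ord. Qed.

Lemma ellE (a b : int) : (a < 0)%R -> (0 < b)%R -> ell a b = (absz (- a) + absz b)%N.
Proof. rewrite /ell; lia. Qed.

Section Inner.
Variables (a b : int) (ha : (a < 0)%R) (hb : (0 < b)%R).

Lemma inner_TT (F G : C -> C) : inner (restr a b a b F) (restr a b a b G) =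
  complex.Re (\sum_(j < absz (b - a)) F (hedge R (a + (j : nat)%:Z) 0) * (G (hedge R (a + (j : nat)%:Z) 0))^*).
Proof.
rewrite /inner; congr complex.Re; apply: eq_bigr => j _; rewrite !ffunE.
have := ltn_ord j; move: (nat_of_ord j) => m; rewrite /ell => hj.
have -> : ((a <= a + m%:Z) && (a + m%:Z < b))%R by apply/andP; split; lia.
done.
Qed.

Lemma inner_LL (F G : C -> C) : inner (restr a b a 0 F) (restr a b a 0 G) =
  complex.Re (\sum_(j < absz (- a)) F (hedge R (a + (j : nat)%:Z) 0) * (G (hedge R (a + (j : nat)%:Z) 0))^*).
Proof.
rewrite /inner.
pose E (j : nat) := (if ((a <= a + j%:Z) && (a + j%:Z < 0))%R then F (hedge R (a + j%:Z) 0) else 0)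
   * (if ((a <= a + j%:Z) && (a + j%:Z < 0))%R then G (hedge R (a + j%:Z) 0) else 0)^*.
rewrite (eq_bigr (fun j : 'I_(ell a b) => E j)); last by move=> j _; rewrite !ffunE.
rewrite (sum_split E (ellE ha hb)) [X in _ + X]big1 ?addr0.
  congr complex.Re; apply: eq_bigr => j _; rewrite /E.
  have := ltn_ord j; move: (nat_of_ord j) => m hj.
  have -> : ((a <= a + m%:Z) && (a + m%:Z < 0))%R by apply/andP; split; lia.
  done.
move=> j _; rewrite /E ifF ?mul0r //.
move: (nat_of_ord j) => m.
apply/negbTE; rewrite negb_and; apply/orP; right; rewrite -leNgt; lia.
Qed.

Lemma inner_RR (F G : C -> C) : inner (restr a b 0 b F) (restr a b 0 b G) =
  complex.Re (\sum_(j < absz b) F (hedge R (0 + (j : nat)%:Z) 0) * (G (hedge R (0 + (j : nat)%:Z) 0))^*).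
Proof.
rewrite /inner.
pose E (j : nat) := (if ((0 <= a + j%:Z) && (a + j%:Z < b))%R then F (hedge R (a + j%:Z) 0) else 0)
   * (if ((0 <= a + j%:Z) && (a + j%:Z < b))%R then G (hedge R (a + j%:Z) 0) else 0)^*.
rewrite (eq_bigr (fun j : 'I_(ell a b) => E j)); last by move=> j _; rewrite !ffunE.
rewrite (sum_split E (ellE ha hb)) big1 ?add0r.
  congr complex.Re; apply: eq_bigr => j _.
  have := ltn_ord j; move: (nat_of_ord j) => m hj.
  have e : (a + (absz (- a) + m)%N%:Z = 0 + m%:Z)%R by lia.
  rewrite /E e.
  have -> : ((0 <= 0 + m%:Z) && (0 + m%:Z < b))%R by apply/andP; split; lia.
  done.
move=> j _; rewrite /E ifF ?mul0r //.
have := ltn_ord j; move: (nat_of_ord j) => m hj.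
apply/negbTE; rewrite negb_and; apply/orP; left; rewrite -ltNge; lia.
Qed.

Lemma inner_LR (F G : C -> C) : inner (restr a b a 0 F) (restr a b 0 b G) = 0.
Proof.
rewrite /inner big1 //= => j _; rewrite !ffunE.
case: ifP => [/andP [_ h1]|_]; last by rewrite mul0r.
have -> : ((0 <= a + (j : nat)%:Z) && (a + (j : nat)%:Z < b))%R = false.
  by apply/negbTE; rewrite negb_and -ltNge h1.
by rewrite ?conjc0 ?raddf0 mulr0.
Qed.

Lemma inner_RL (F G : C -> C) : inner (restr a b 0 b F) (restr a b a 0 G) = 0.
Proof.
rewrite /inner big1 //= => j _; rewrite !ffunE.
case: ifP => [/andP [h1 _]|_]; last by rewrite mul0r.
have -> : ((a <= a + (j : nat)%:Z) && (a + (j : nat)%:Z < 0))%R = false.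
  by apply/negbTE; rewrite negb_and -leNgt h1 orbT.
by rewrite ?conjc0 ?raddf0 mulr0.
Qed.
End Inner.
Lemma mx_complete (N : nat) (I : finType) (e : I -> 'rV[R]_N) : #|I| = N ->
  (forall i j, (e i *m (e j)^T) 0 0 = (i == j)%:R) ->
  forall y : 'rV_N, y = \sum_i ((y *m (e i)^T) 0 0) *: e i.
Proof.
move=> hI he y.
pose g (k : 'I_N) : I := enum_val (cast_ord (esym hI) k).
pose gi (i : I) : 'I_N := cast_ord hI (enum_rank i).
have gK : cancel g gi by move=> k; rewrite /g /gi enum_valK cast_ordKV.
have giK : cancel gi g by move=> i; rewrite /g /gi cast_ordK enum_rankK.
pose E : 'M[R]_N := \matrix_(k, j) e (g k) 0 j.
have EE : E *m E^T = 1%:M.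
  apply/matrixP => k l; rewrite !mxE.
  have -> : \sum_j E k j * E^T j l = (e (g k) *m (e (g l))^T) 0 0.
    by rewrite mxE; apply: eq_bigr => j _; rewrite !mxE.
  by rewrite he (inj_eq (can_inj gK)).
have EtE := mulmx1C EE.
rewrite -{1}(mulmx1 y) -EtE mulmxA mulmx_sum_row.
rewrite (reindex gi); last by exists g => i _; [exact: giK | exact: gK].
apply: eq_bigr => i _.
have -> : row (gi i) E = e i by apply/rowP => j; rewrite !mxE giK.
congr (_ *: _); rewrite !mxE; apply: eq_bigr => j _; by rewrite !mxE giK.
Qed.
Lemma ReD' (x y : C) : complex.Re (x + y) = complex.Re x + complex.Re y.
Proof. by case: x y => ? ? [? ?]. Qed.
Lemma ImD' (x y : C) : complex.Im (x + y) = complex.Im x + complex.Im y.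
Proof. by case: x y => ? ? [? ?]. Qed.
Lemma ReMr' (k : R) (z : C) : complex.Re (k%:C * z) = k * complex.Re z.
Proof. by case: z => x y; simpc. Qed.
Lemma ImMr' (k : R) (z : C) : complex.Im (k%:C * z) = k * complex.Im z.
Proof. by case: z => x y; simpc. Qed.

Definition vc (l : nat) (x : {ffun 'I_l -> C}) : 'rV[R]_(l + l) :=
  row_mx (\row_j complex.Re (x j)) (\row_j complex.Im (x j)).

Lemma vcD l (x y : {ffun 'I_l -> C}) : vc (x + y) = vc x + vc y.
Proof. by rewrite /vc add_row_mx; congr row_mx; apply/rowP => j; rewrite !mxE ffunE ?ReD' ?ImD'. Qed.
Lemma vc0 l : vc (0 : {ffun 'I_l -> C}) = 0.
Proof. by rewrite /vc -row_mx0; congr row_mx; apply/rowP => j; rewrite !mxE ffunE. Qed.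
Lemma vcZ l (c : R) (x : {ffun 'I_l -> C}) : vc (c%:C *: x) = c *: vc x.
Proof. by rewrite /vc scale_row_mx; congr row_mx; apply/rowP => j; rewrite !mxE ffunE ?ReMr' ?ImMr'. Qed.
Lemma vc_sum l (I : finType) (c : I -> R) (e : I -> {ffun 'I_l -> C}) :
  vc (\sum_i (c i)%:C *: e i) = \sum_i c i *: vc (e i).
Proof.
rewrite (big_morph (@vc l) (@vcD l) (@vc0 l)); apply: eq_bigr => i _; exact: vcZ.
Qed.
Lemma vc_inj l (x y : {ffun 'I_l -> C}) : vc x = vc y -> x = y.
Proof.
move/eq_row_mx => [h1 h2]; apply/ffunP => j.
have := congr1 (fun M : 'rV_l => M 0 j) h1; have := congr1 (fun M : 'rV_l => M 0 j) h2.
rewrite /= !mxE; case: (x j) (y j) => [u v] [u' v'] /= -> -> //.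
Qed.
Lemma vc_dot l (x y : {ffun 'I_l -> C}) :
  (vc x *m (vc y)^T) 0 0 = complex.Re (\sum_j x j * (y j)^*).
Proof.
rewrite /vc tr_row_mx mul_row_col !mxE (big_morph _ ReD' (erefl (complex.Re 0))) -big_split /=.
apply: eq_bigr => j _; rewrite !mxE.
by case: (x j) (y j) => [u v] [u' v']; simpc.
Qed.
Lemma inner_sym (a b : int) (x y : Hsp R a b) : inner x y = inner y x.
Proof.
rewrite /inner !(big_morph _ ReD' (erefl (complex.Re 0))); apply: eq_bigr => j _.
by case: (x j) (y j) => [u v] [u' v']; simpc => /=; ring.
Qed.
Lemma H_complete (a b : int) (I : finType) (e : I -> Hsp R a b) :
  #|I| = (ell a b + ell a b)%N -> (forall i j, inner (e i) (e j) = (i == j)%:R) ->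
  forall x : Hsp R a b, x = \sum_i (inner (e i) x)%:C *: e i.
Proof.
move=> hI he x; apply: vc_inj; rewrite vc_sum.
rewrite {1}(@mx_complete _ I (fun i => vc (e i)) hI _ (vc x)); last first.
  by move=> i j; rewrite vc_dot; exact: he.
apply: eq_bigr => i _; congr (_ *: _); rewrite vc_dot inner_sym //.
Qed.
Lemma NconjE (z : C) : Num.conj z = z^*.
Proof. by []. Qed.
Lemma NiE : (Num.imaginary : C) = 'i.
Proof. by []. Qed.
Lemma conjM_real (c : R) (z : C) : (c%:C * z)^* = c%:C * z^*.
Proof. by case: z => x y; simpc. Qed.
Lemma conjD' (x y : C) : (x + y)^* = x^* + y^*.
Proof. by case: x y => ? ? [? ?]; simpc. Qed.
Section Phi.
Variables (a b : int).
Lemma phiD (f g : Hsp R a b) v : phi (f + g) v = phi f v + phi g v.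
Proof.
rewrite /phi -scalerDr -big_split; congr (_ *: _); apply: eq_bigr => j _ /=.
rewrite ffunE !NconjE (conjD' (f j) (g j)) !mulrDr !scalerDl opprD; rewrite addrACA //.
Qed.
Lemma phiZ (c : R) (f : Hsp R a b) v : phi (c%:C *: f) v = c%:C *: phi f v.
Proof.
rewrite /phi [RHS]scalerA [c%:C * _]mulrC -[RHS]scalerA; congr (_ *: _); rewrite scaler_sumr.
apply: eq_bigr => j _; rewrite ffunE !NconjE -[c%:C *: f j]/(c%:C * f j) conjM_real scalerBr !scalerA.
by rewrite !(mulrCA 'i).
Qed.
Lemma phi0 v : phi (0 : Hsp R a b) v = 0.
Proof. by rewrite -(scale0r (0 : Hsp R a b)) -[0 : R[i]]/((0 : R)%:C) phiZ scale0r. Qed.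
Lemma phi_sum (I : finType) (c : I -> R) (e : I -> Hsp R a b) v :
  phi (\sum_i (c i)%:C *: e i) v = \sum_i (c i)%:C *: phi (e i) v.
Proof.
rewrite (big_morph (fun f => phi f v) (fun f g => phiD f g v) (phi0 v)).
by apply: eq_bigr => i _; rewrite phiZ.
Qed.
Lemma phiB (f g : Hsp R a b) v : phi (f - g) v = phi f v - phi g v.
Proof.
have -> : - g = (-1 : R)%:C *: g by rewrite rmorphN rmorph1 scaleN1r.
by rewrite phiD phiZ rmorphN rmorph1 scaleN1r.
Qed.
End Phi.
End S.
Section M.
Variable R : realType.
Local Notation C := R[i].
Lemma complete_T (a b : int) (n : nat) (hn : ell a b = n) (e : bool -> 'I_n -> Hsp R a b)
  (ON : forall s k s' k', inner (e s k) (e s' k') = ((s, k) == (s', k'))%:R) (x : Hsp R a b) :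
  x = \sum_k (inner (e true k) x)%:C *: e true k + \sum_k (inner (e false k) x)%:C *: e false k.
Proof.
have h := @H_complete R a b (bool * 'I_n)%type (fun p => e p.1 p.2).
rewrite {1}(h _ _ x).
- rewrite -(pair_bigA _ (fun s k => (inner (e s k) x)%:C *: e s k)) big_bool //.
- by rewrite card_prod card_bool card_ord hn mul2n addnn.
- by move=> [s k] [s' k']; exact: ON.
Qed.
Lemma complete_LR (a b : int) (nL nR : nat) (hn : ell a b = (nL + nR)%N)
  (eL : bool -> 'I_nL -> Hsp R a b) (eR : bool -> 'I_nR -> Hsp R a b)
  (ONL : forall s k s' k', inner (eL s k) (eL s' k') = ((s, k) == (s', k'))%:R)
  (ONR : forall s k s' k', inner (eR s k) (eR s' k') = ((s, k) == (s', k'))%:R)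
  (X : forall s k s' k', inner (eL s k) (eR s' k') = 0) (x : Hsp R a b) :
  x = (\sum_k (inner (eL true k) x)%:C *: eL true k + \sum_k (inner (eL false k) x)%:C *: eL false k)
    + (\sum_k (inner (eR true k) x)%:C *: eR true k + \sum_k (inner (eR false k) x)%:C *: eR false k).
Proof.
pose e (p : (bool * 'I_nL) + (bool * 'I_nR)) :=
  match p with inl q => eL q.1 q.2 | inr q => eR q.1 q.2 end.
have h := @H_complete R a b ((bool * 'I_nL) + (bool * 'I_nR))%type e.
rewrite {1}(h _ _ x).
- rewrite big_sumType /=.
  rewrite -(pair_bigA _ (fun s k => (inner (eL s k) x)%:C *: eL s k)) big_bool.
  by rewrite -(pair_bigA _ (fun s k => (inner (eR s k) x)%:C *: eR s k)) big_bool.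
- by rewrite card_sum !card_prod card_bool !card_ord hn; lia.
- move=> [[s k]|[s k]] [[s' k']|[s' k']] /=.
  + exact: ONL.
  + exact: X.
  + by rewrite inner_sym X.
  + exact: ONR.
Qed.
Lemma ReB' (x y : C) : complex.Re (x - y) = complex.Re x - complex.Re y.
Proof. by case: x y => ? ? [? ?]. Qed.
Lemma innerB (a b : int) (x y z : Hsp R a b) : inner (x - y) z = inner x z - inner y z.
Proof.
rewrite /inner (eq_bigr (fun j => x j * (z j)^* - y j * (z j)^*)); last first.
  by move=> j _; rewrite !ffunE mulrBl.
by rewrite sumrB ReB'.
Qed.
Lemma delta_sum (a b : int) (n : nat) (s0 : bool) (k0 : 'I_n) (g : 'I_n -> Hsp R a b) :
  \sum_k ((((s0, k0) == (s0, k))%:R : R)%:C *: g k) = g k0.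
Proof.
rewrite (bigD1 k0) //= eqxx big1 ?addr0 ?scale1r //.
move=> k hk; rewrite (_ : ((s0, k0) == (s0, k)) = false) ?scale0r //.
by apply/negbTE; rewrite xpair_eqE eqxx /= eq_sym.
Qed.
End M.
Lemma zmod3 (V : zmodType) (A B D : V) : B = (A + B + D) - A - D.
Proof. by rewrite addrAC (addrK D) addrC addKr. Qed.
Lemma zmod3' (V : zmodType) (A B D : V) : D = (A + B + D) - A - B.
Proof. by rewrite -[A + B + D]addrA [B + D]addrC addrA; exact: zmod3. Qed.
Unset Implicit Arguments.
Theorem lemma5p18 (R : realType) (a b : int) (ha : a < 0) (hb : 0 < b)
  (FT : bool -> 'I_(absz (b - a)) -> R[i] -> R[i])
  (FL : bool -> 'I_(absz (- a)) -> R[i] -> R[i])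
  (FR : bool -> 'I_(absz b) -> R[i] -> R[i])
  (hFT : forall s (k : 'I_(absz (b - a))), eigen_spec a b s k (FT s k))
  (hFL : forall s (k : 'I_(absz (- a))), eigen_spec a 0 s k (FL s k))
  (hFR : forall s (k : 'I_(absz b)), eigen_spec 0 b s k (FR s k))
  (pT : 'I_(absz (b - a)) -> Hsp R a b)
  (pL : 'I_(absz (- a)) -> Hsp R a b)
  (pR : 'I_(absz b) -> Hsp R a b) :
  let f := fun s k => restr a b a b (FT s k) in
  let fL := fun s k => restr a b a 0 (FL s k) in
  let fR := fun s k => restr a b 0 b (FR s k) in
  (forall k, is_orth_proj (f true) (pT k) (f true k) /\
             is_orth_proj (fL false) (pT k) 0 /\
             is_orth_proj (fR false) (pT k) 0) ->
  (forall k, is_orth_proj (f true) (pL k) 0 /\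
             is_orth_proj (fL false) (pL k) (fL false k) /\
             is_orth_proj (fR false) (pL k) 0) ->
  (forall k, is_orth_proj (f true) (pR k) 0 /\
             is_orth_proj (fL false) (pR k) 0 /\
             is_orth_proj (fR false) (pR k) (fR false k)) ->
  [/\ forall (k : 'I_(absz (b - a))) (v : Vt R a b),
        phi (f true k) v =
          - (\sum_(k' < absz (b - a)) (inner (f false k') (pT k))%:C *: phi (f false k') v)
          + (\sum_(k' < absz (- a)) (inner (fL true k') (pT k))%:C *: phi (fL true k') v)
          + (\sum_(k' < absz b) (inner (fR true k') (pT k))%:C *: phi (fR true k') v),
      forall (k : 'I_(absz (- a))) (v : Vt R a b),
        phi (fL false k) v =
          (\sum_(k' < absz (b - a)) (inner (f false k') (pL k))%:C *: phi (f false k') v)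
          - (\sum_(k' < absz (- a)) (inner (fL true k') (pL k))%:C *: phi (fL true k') v)
          - (\sum_(k' < absz b) (inner (fR true k') (pL k))%:C *: phi (fR true k') v) &
      forall (k : 'I_(absz b)) (v : Vt R a b),
        phi (fR false k) v =
          (\sum_(k' < absz (b - a)) (inner (f false k') (pR k))%:C *: phi (f false k') v)
          - (\sum_(k' < absz (- a)) (inner (fL true k') (pR k))%:C *: phi (fL true k') v)
          - (\sum_(k' < absz b) (inner (fR true k') (pR k))%:C *: phi (fR true k') v)].
Proof.
move=> f fL fR HT HL HR.
have hab : (a < b)%R := lt_trans ha hb.
have OT : forall s k s' k', inner (f s k) (f s' k') = ((s, k) == (s', k'))%:R.
  by move=> s k s' k'; rewrite /f inner_TT //; exact: (strip_ON hab (erefl _) hFT).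
have OL : forall s k s' k', inner (fL s k) (fL s' k') = ((s, k) == (s', k'))%:R.
  move=> s k s' k'; rewrite /fL inner_LL //.
  have hn : absz (- a) = absz (0 - a) by rewrite sub0r.
  exact: (strip_ON ha hn hFL).
have OR : forall s k s' k', inner (fR s k) (fR s' k') = ((s, k) == (s', k'))%:R.
  move=> s k s' k'; rewrite /fR inner_RR //.
  have hn : absz b = absz (b - 0) by rewrite subr0.
  exact: (strip_ON hb hn hFR).
have X : forall s k s' k', inner (fL s k) (fR s' k') = 0.
  by move=> s k s' k'; rewrite /fL /fR inner_LR.
have CT := complete_T (erefl (ell a b)) OT.
have CLR := complete_LR (ellE ha hb) OL OR X.
split.
- move=> k v; set p := pT k.
  have [[_ h1] [[_ h2] [_ h3]]] := HT k.
  have c1 : forall i, inner (f true i) p = (((true, k) == (true, i))%:R : R).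
    move=> i; rewrite inner_sym -OT; apply/eqP; rewrite -subr_eq0 -innerB; apply/eqP; exact: h1.
  have c2 : forall i, inner (fL false i) p = 0 by move=> i; rewrite inner_sym -(h2 i) subr0.
  have c3 : forall i, inner (fR false i) p = 0 by move=> i; rewrite inner_sym -(h3 i) subr0.
  have e1 := CT p; rewrite (eq_bigr _ (fun i _ => congr1 (fun r : R => r%:C *: f true i) (c1 i))) delta_sum in e1.
  have e2 := CLR p.
  rewrite (eq_bigr (fun i => 0) (fun i _ => etrans (congr1 (fun r : R => r%:C *: fL false i) (c2 i)) (scale0r _))) in e2.
  rewrite (eq_bigr (fun i => 0) (fun i _ => etrans (congr1 (fun r : R => r%:C *: fR false i) (c3 i)) (scale0r _))) in e2.
  rewrite !big1_eq !addr0 in e2.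
  have -> : f true k = (\sum_k (inner (fL true k) p)%:C *: fL true k + \sum_k (inner (fR true k) p)%:C *: fR true k)
     - \sum_k (inner (f false k) p)%:C *: f false k.
    by rewrite -e2 {1}e1 addrK.
  rewrite phiB phiD !phi_sum.
  by rewrite [X in X = _]addrC addrA.
- move=> k v; set p := pL k.
  have [[_ h1] [[_ h2] [_ h3]]] := HL k.
  have c1 : forall i, inner (f true i) p = 0 by move=> i; rewrite inner_sym -(h1 i) subr0.
  have c2 : forall i, inner (fL false i) p = (((false, k) == (false, i))%:R : R).
    move=> i; rewrite inner_sym -OL; apply/eqP; rewrite -subr_eq0 -innerB; apply/eqP; exact: h2.
  have c3 : forall i, inner (fR false i) p = 0 by move=> i; rewrite inner_sym -(h3 i) subr0.
  have e1 := CT p.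
  rewrite (eq_bigr (fun i => 0) (fun i _ => etrans (congr1 (fun r : R => r%:C *: f true i) (c1 i)) (scale0r _))) in e1.
  rewrite big1_eq add0r in e1.
  have e2 := CLR p.
  rewrite (eq_bigr _ (fun i _ => congr1 (fun r : R => r%:C *: fL false i) (c2 i))) delta_sum in e2.
  rewrite (eq_bigr (fun i => 0) (fun i _ => etrans (congr1 (fun r : R => r%:C *: fR false i) (c3 i)) (scale0r _))) in e2.
  rewrite big1_eq addr0 in e2.
  have -> : fL false k = \sum_k (inner (f false k) p)%:C *: f false k
     - \sum_k (inner (fL true k) p)%:C *: fL true k - \sum_k (inner (fR true k) p)%:C *: fR true k.
    by rewrite -e1 {1}e2; exact: zmod3.
  by rewrite !phiB !phi_sum.
- move=> k v; set p := pR k.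
  have [[_ h1] [[_ h2] [_ h3]]] := HR k.
  have c1 : forall i, inner (f true i) p = 0 by move=> i; rewrite inner_sym -(h1 i) subr0.
  have c2 : forall i, inner (fL false i) p = 0 by move=> i; rewrite inner_sym -(h2 i) subr0.
  have c3 : forall i, inner (fR false i) p = (((false, k) == (false, i))%:R : R).
    move=> i; rewrite inner_sym -OR; apply/eqP; rewrite -subr_eq0 -innerB; apply/eqP; exact: h3.
  have e1 := CT p.
  rewrite (eq_bigr (fun i => 0) (fun i _ => etrans (congr1 (fun r : R => r%:C *: f true i) (c1 i)) (scale0r _))) in e1.
  rewrite big1_eq add0r in e1.
  have e2 := CLR p.
  rewrite (eq_bigr (fun i => 0) (fun i _ => etrans (congr1 (fun r : R => r%:C *: fL false i) (c2 i)) (scale0r _))) in e2.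
  rewrite (eq_bigr _ (fun i _ => congr1 (fun r : R => r%:C *: fR false i) (c3 i))) delta_sum in e2.
  rewrite big1_eq addr0 addrA in e2.
  have -> : fR false k = \sum_k (inner (f false k) p)%:C *: f false k
     - \sum_k (inner (fL true k) p)%:C *: fL true k - \sum_k (inner (fR true k) p)%:C *: fR true k.
    by rewrite -e1 {1}e2; exact: zmod3'.
  by rewrite !phiB !phi_sum.
Qed.
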